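(* Let $q>1$. For every integer $N\ge1$, $$H_{N+1}(x;q)=\frac{[N+1]_q}{N+1}\Big\{[2]_q x H_N(x;q)-2[N]_qH_{N-1}(x;q)-(q-1)[2]_q[N]_q x^2H_{N-1}(x;q)+[2]_q[N]_q!\sum_{k=0}^{N-2}\frac{(1-q^2)^{N-k}x^{N-k+1}H_k(x;q)}{[k]_q!\,[N-k+1]_q}\Big\},$$ where the sum is empty when $N=1$.
   Context: For $n\ge 0$ let $[n]_q=\frac{q^n-1}{q-1}$, $[0]_q!=1$, $[n]_q!=[1]_q\cdots[n]_q$, and $e_q(z)=\sum_{n\ge0}z^n/[n]_q!$. The $q$-Hermite polynomials $H_N(x;q)$ are defined by the identity of formal power series in $t$: $e^{-t^2}e_q([2]_q t x)=\sum_{N\ge0}H_N(x;q)\,t^N/[N]_q!$. *)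

(* Defs.v *)
From HB Require Import structures.
From mathcomp Require Import all_boot all_order all_algebra.
Set Implicit Arguments. Unset Strict Implicit. Unset Printing Implicit Defensive.
Import Order.TTheory GRing.Theory Num.Theory.
Local Open Scope ring_scope.

Section QHermite.
Variable R : realFieldType.

Definition qint (q : R) (n : nat) : R := (q ^+ n - 1) / (q - 1).

Definition qfact (q : R) (n : nat) : R := \prod_(1 <= i < n.+1) qint q i.

(* Formal power series in t are represented by coefficient sequences nat -> R;
   the product of formal power series is the Cauchy product. *)
Definition fps_mul (a b : nat -> R) (n : nat) : R :=
  \sum_(i < n.+1) a i * b (n - i)%N.

(* coefficients of e^{-t^2} = sum_m (-1)^m t^(2m) / m! *)
Definition exp_mt2 (n : nat) : R :=
  if odd n then 0 else (-1) ^+ (n./2) / (n./2)`!%:R.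

(* coefficients of e_q(c t) = sum_n c^n t^n / [n]_q! *)
Definition eq_scaled (q c : R) (n : nat) : R := c ^+ n / qfact q n.

(* H_N(x;q) := [N]_q! * (coefficient of t^N in e^{-t^2} e_q([2]_q t x)) *)
Definition qHermite (q x : R) (N : nat) : R :=
  qfact q N * fps_mul exp_mt2 (eq_scaled q (qint q 2 * x)) N.

End QHermite.

(* Main.v *)
Require Import Defs.
From HB Require Import structures.
From mathcomp Require Import all_boot all_order all_algebra.
From mathcomp Require Import ring zify.
Import Order.TTheory GRing.Theory Num.Theory.
Local Open Scope ring_scope.

Section Aux.
Variable R : realFieldType.

Lemma fps_poly (a b : nat -> R) {n m} : (m <= n)%N ->
  fps_mul a b m = (\poly_(i < n.+1) a i * \poly_(i < n.+1) b i)`_m.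
Proof.
move=> hm; rewrite coefM /fps_mul; apply: eq_bigr => j _.
rewrite !coef_poly.
have hj : (j < n.+1)%N by apply: leq_trans (ltn_ord j) _; rewrite ltnS.
have hj2 : (m - j < n.+1)%N by rewrite ltnS (leq_trans (leq_subr _ _) hm).
by rewrite hj hj2.
Qed.

Lemma fps_assoc (a b c : nat -> R) n :
  fps_mul (fps_mul a b) c n = fps_mul a (fps_mul b c) n.
Proof.
set Pa := \poly_(i < n.+1) a i; set Pb := \poly_(i < n.+1) b i.
set Pc := \poly_(i < n.+1) c i.
have -> : fps_mul (fps_mul a b) c n = (Pa * Pb * Pc)`_n.
  rewrite coefM /fps_mul; apply: eq_bigr => i _.
  have hi : (i <= n)%N by rewrite -ltnS.
  rewrite -/(fps_mul a b i) (fps_poly _ _ hi) coef_poly.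
  by rewrite ltnS leq_subr.
have -> : fps_mul a (fps_mul b c) n = (Pa * (Pb * Pc))`_n.
  rewrite coefM /fps_mul; apply: eq_bigr => i _.
  have hi : (n - i <= n)%N by rewrite leq_subr.
  rewrite -/(fps_mul b c (n - i)) (fps_poly _ _ hi) coef_poly.
  by rewrite ltn_ord.
by rewrite mulrA.
Qed.

Variable q : R.
Hypothesis hq : 1 < q.

Lemma q1 : q - 1 != 0.
Proof. by rewrite subr_eq0 gt_eqF. Qed.

Lemma qpow1 n : (0 < n)%N -> q ^+ n - 1 != 0.
Proof. move=> hn; rewrite subr_eq0 gt_eqF // exprn_egt1 //; by rewrite -lt0n. Qed.

Lemma qintE n : qint q n * (q - 1) = q ^+ n - 1.
Proof. by rewrite /qint divfK // q1. Qed.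

Lemma qint_neq0 n : (0 < n)%N -> qint q n != 0.
Proof. move=> hn; rewrite /qint mulf_neq0 ?invr_eq0 ?q1 ?qpow1 //. Qed.

Lemma qint1 : qint q 1 = 1.
Proof. by rewrite /qint expr1 divff // q1. Qed.

Lemma qint2 : qint q 2 = 1 + q.
Proof.
apply: (mulIf q1); rewrite qintE; ring.
Qed.

Lemma qfact0 : qfact q 0 = 1.
Proof. by rewrite /qfact big_geq. Qed.

Lemma qfactS n : qfact q n.+1 = qfact q n * qint q n.+1.
Proof. by rewrite /qfact big_nat_recr. Qed.

Lemma qfact_neq0 n : qfact q n != 0.
Proof.
elim: n => [|n IH]; first by rewrite qfact0 oner_eq0.
by rewrite qfactS mulf_neq0 // qint_neq0.
Qed.

Definition ff n := (qfact q n)^-1.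

Lemma ff0 : ff 0 = 1.
Proof. by rewrite /ff qfact0 invr1. Qed.

Lemma ff_rec n : (q ^+ n.+1 - 1) * ff n.+1 = (q - 1) * ff n.
Proof.
rewrite /ff qfactS -qintE invfM.
field. by rewrite qfact_neq0 qint_neq0 // q1.
Qed.

Definition ss j := (1 - q) ^+ j / qint q j.+1.

Lemma ss_rec j : q ^+ j.+1 * ss j = ss j + (q - 1) * (1 - q) ^+ j.
Proof.
have h : (q ^+ j.+1 - 1) * ss j = (q - 1) * (1 - q) ^+ j.
  rewrite /ss -qintE; field; by rewrite qint_neq0.
by rewrite -h; ring.
Qed.

Definition aa N := \sum_(j < N.+1) ff (N - j) * ss j.

Lemma tele M :
  \sum_(j < M.+1) (ff (M.+1 - j) * (1 - q) ^+ j - ff (M - j) * (1 - q) ^+ j.+1)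
  = ff M.+1 - (1 - q) ^+ M.+1.
Proof.
pose u (j : nat) := - (ff (M.+1 - j) * (1 - q) ^+ j).
rewrite -(big_mkord xpredT (fun j => ff (M.+1 - j) * (1 - q) ^+ j - ff (M - j) * (1 - q) ^+ j.+1)).
rewrite (@telescope_sumr_eq _ 0 M.+1 u) //.
  by rewrite /u subnn ff0 subn0; ring.
move=> k _; rewrite /u subSS; ring.
Qed.

Lemma aaA M : q ^+ M.+2 * aa M.+1 = aa M.+1 + (q - 1) * (aa M + ff M.+1).
Proof.
have E1 : q ^+ M.+2 * aa M.+1 =
  \sum_(j < M.+1) (ff (M.+1 - j) + (q - 1) * ff (M - j)) * (ss j + (q - 1) * (1 - q) ^+ j)
  + (ss M.+1 + (q - 1) * (1 - q) ^+ M.+1).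
  rewrite /aa mulr_sumr big_ord_recr /= subnn ff0.
  congr (_ + _); last by rewrite -ss_rec; ring.
  apply: eq_bigr => j _ /=.
  have hj : (j <= M)%N by rewrite -ltnS.
  have -> : q ^+ M.+2 = q ^+ (M - j).+1 * q ^+ j.+1.
    by rewrite -exprD addSn addnS subnK.
  rewrite subSn // -ss_rec.
  rewrite -(ff_rec (M - j)); ring.
have E2 : aa M.+1 = \sum_(j < M.+1) ff (M.+1 - j) * ss j + ss M.+1.
  by rewrite /aa big_ord_recr /= subnn ff0 mul1r.
have E4 : \sum_(j < M.+1) (ff (M.+1 - j) + (q - 1) * ff (M - j)) * (ss j + (q - 1) * (1 - q) ^+ j)
  = \sum_(j < M.+1) ff (M.+1 - j) * ss j + (q - 1) * aa M
   + (q - 1) * \sum_(j < M.+1) (ff (M.+1 - j) * (1 - q) ^+ j - ff (M - j) * (1 - q) ^+ j.+1).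
  rewrite /aa !mulr_sumr -!big_split; apply: eq_bigr => j _ /=.
  rewrite exprS; ring.
rewrite E1 E4 tele E2; ring.
Qed.

Lemma aaE N : aa N = N.+1%:R * ff N.+1.
Proof.
elim: N => [|M IH].
  by rewrite /aa big_ord1 subn0 ff0 /ss /ff qfactS qfact0 expr0 qint1 !mul1r invr1.
have hne : q ^+ M.+2 - 1 != 0 by rewrite qpow1.
apply: (mulfI hne).
have HA := aaA M; rewrite IH in HA.
have HF := ff_rec M.+1.
rewrite mulrBl HA [RHS]mulrCA HF -(natr1 M.+1); ring.
Qed.

Lemma e_rec n : n.+2%:R * exp_mt2 R n.+2 = -2 * exp_mt2 R n.
Proof.
rewrite /exp_mt2 /= negbK.
case: ifP => ho; first by rewrite !mulr0.
set k := n./2.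
have hn : n = (k.*2)%N by rewrite -{1}(odd_double_half n) ho.
have -> : n.+2 = (k.+1 * 2)%N by rewrite {1}hn -muln2; lia.
rewrite factS natrM natrM exprS.
have h1 : k.+1%:R != 0 :> R by rewrite pnatr_eq0.
have h2 : k`!%:R != 0 :> R by rewrite pnatr_eq0 -lt0n fact_gt0.
field; by rewrite h2 addrC natr1 h1.
Qed.

Variable c : R.
Let E := eq_scaled q c.
Let h := fps_mul (exp_mt2 R) E.
Definition sp j := c ^+ j.+1 * ss j.

Lemma EspE n : fps_mul E sp n = c ^+ n.+1 * aa n.
Proof.
rewrite /aa mulr_sumr /fps_mul (reindex_inj rev_ord_inj) /=; apply: eq_bigr => j _.
have hj : (j <= n)%N by rewrite -ltnS.
rewrite subSS subKn //.
have -> : c ^+ n.+1 = c ^+ (n - j) * c ^+ j.+1 by rewrite -exprD addnS subnK.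
rewrite /E /eq_scaled /sp /ff; ring.
Qed.

Lemma hC M : M.+2%:R * h M.+2 = -2 * h M + fps_mul h sp M.+1.
Proof.
rewrite /h fps_assoc {1}/fps_mul.
have -> : M.+2%:R * \sum_(i < M.+3) exp_mt2 R i * E (M.+2 - i) =
  \sum_(i < M.+3) exp_mt2 R i * ((M.+2 - i)%:R * E (M.+2 - i))
  + \sum_(i < M.+3) (i%:R * exp_mt2 R i) * E (M.+2 - i).
  rewrite mulr_sumr -big_split; apply: eq_bigr => i _ /=.
  have hi : (i <= M.+2)%N by rewrite -ltnS.
  rewrite -{1}(subnK hi) natrD; ring.
rewrite addrC; congr (_ + _).
  rewrite big_ord_recl /= mulr0n !mul0r add0r big_ord_recl /= /bump /= !add1n.
  have -> : exp_mt2 R 1 = 0 by [].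
  rewrite mulr0 mul0r add0r /fps_mul mulr_sumr; apply: eq_bigr => i _ /=.
  rewrite e_rec subSS; ring.
rewrite big_ord_recr /= subnn mulr0n mul0r mulr0 addr0 /fps_mul; apply: eq_bigr => i _ /=.
have hi : (i <= M.+1)%N by rewrite -ltnS.
rewrite subSn // -/(fps_mul E sp (M.+1 - i)) EspE aaE /E /eq_scaled /ff; ring.
Qed.

Lemma main_aux x M (hc : c = qint q 2 * x) :
  qHermite q x M.+2 =
    qint q M.+2 / M.+2%:R *
    (qint q 2 * x * qHermite q x M.+1
     - 2 * qint q M.+1 * qHermite q x M
     - (q - 1) * qint q 2 * qint q M.+1 * x ^+ 2 * qHermite q x M
     + qint q 2 * qfact q M.+1 *
       \sum_(0 <= k < M)
          ((1 - q ^+ 2) ^+ (M.+1 - k) * x ^+ (M.+1 - k).+1 * qHermite q x k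
           / (qfact q k * qint q (M.+1 - k).+1))).
Proof.
have HH n : qHermite q x n = qfact q n * h n by rewrite /qHermite /h /E hc.
have q2 : 1 + q != 0.
  by rewrite gt_eqF // addr_gt0 // (lt_trans ltr01 hq).
have HS : \sum_(0 <= k < M)
          ((1 - q ^+ 2) ^+ (M.+1 - k) * x ^+ (M.+1 - k).+1 * qHermite q x k
           / (qfact q k * qint q (M.+1 - k).+1))
   = (qint q 2)^-1 * \sum_(k < M) h k * sp (M.+1 - k).
  rewrite big_mkord mulr_sumr; apply: eq_bigr => k _.
  set m := (M.+1 - k)%N.
  have hm : qint q m.+1 != 0 by rewrite qint_neq0.
  have hk := qfact_neq0 k.
  have -> : 1 - q ^+ 2 = (1 - q) * (1 + q) by ring.
  rewrite HH /sp /ss hc qint2 !exprMn !exprS.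
  field; by rewrite hm hk q2.
have HF : fps_mul h sp M.+1 = \sum_(k < M) h k * sp (M.+1 - k)
     + h M * sp 1 + h M.+1 * sp 0.
  rewrite /fps_mul big_ord_recr big_ord_recr /= subnn subSnn.
  congr (_ + _ + _); apply: eq_bigr => i _ //.
have hM2 : M.+2%:R != 0 :> R by rewrite pnatr_eq0.
have HM2 : h M.+2 = (M.+2%:R)^-1 * (-2 * h M + fps_mul h sp M.+1).
  by rewrite -hC mulKf.
rewrite HS !HH HM2 HF /sp /ss qint1 !qfactS qint2.
rewrite qint2 in hc; rewrite hc.
have := qfact_neq0 M => hf.
have hi1 : qint q M.+1 != 0 by rewrite qint_neq0.
field; by rewrite q2 -natrD pnatr_eq0.
Qed.

End Aux.

Theorem mainTheorem4 (R : realFieldType) (q : R) (hq : 1 < q) (x : R) (N : nat)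
    (hN : (1 <= N)%N) :
  qHermite q x N.+1 =
    qint q N.+1 / N.+1%:R *
    (qint q 2 * x * qHermite q x N
     - 2 * qint q N * qHermite q x N.-1
     - (q - 1) * qint q 2 * qint q N * x ^+ 2 * qHermite q x N.-1
     + qint q 2 * qfact q N *
       \sum_(0 <= k < N.-1)
          ((1 - q ^+ 2) ^+ (N - k) * x ^+ (N - k).+1 * qHermite q x k
           / (qfact q k * qint q (N - k).+1))).
Proof.
case: N hN => [//|M] _.
exact: (@main_aux R q hq (qint q 2 * x) x M erefl).
Qed.
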